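(* Let $1<\alpha<2$, let $k_0\ge 3$ be an integer, and for $j\in\mathbb{Z}$ let $c_j=(-1)^j\Gamma(\alpha+1)/[\Gamma(\alpha/2-j+1)\Gamma(\alpha/2+j+1)]$. Then $$\frac{\left(1-\frac{1+\alpha}{5+\alpha/2}\right)^{5+\alpha/2}e^{\alpha+1}\Gamma(\alpha+1)\sin(\pi\alpha/2)}{\pi\alpha\,(k_0+1/2)^{\alpha}}<\sum_{j=k_0+1}^{\infty}|c_j|<\frac{\sqrt{2}\,e^{13/12}\,\Gamma(\alpha+1)\sin(\pi\alpha/2)}{\pi\alpha\,(k_0-1)^{\alpha}}.$$
   Context: $\Gamma$ denotes the Euler gamma function (with $1/\Gamma$ taken to be $0$ at poles). *)

(* Defs.v *)
From Stdlib Require Import Reals Arith.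
From Coquelicot Require Import Coquelicot.
Open Scope R_scope.

Fixpoint pochhammer_succ (x : R) (n : nat) : R :=
  match n with
  | O => x
  | S m => pochhammer_succ x m * (x + INR (S m))
  end.

(* Reciprocal Gamma function via Gauss's product formula, valid for every real x:
   1/Gamma(x) = lim_{n->oo} x(x+1)...(x+n) / (n! n^x).
   It vanishes exactly at the poles 0,-1,-2,... (the convention 1/Gamma = 0 there). *)
Definition rgamma (x : R) : R :=
  real (Lim_seq (fun n => pochhammer_succ x n / (INR (fact n) * Rpower (INR n) x))).

(* Euler Gamma function (used only away from poles). *)
Definition Gamma (x : R) : R := / rgamma x.

Definition cj (alpha : R) (j : Z) : R :=
  powerRZ (-1) j * Gamma (alpha + 1)
  * rgamma (alpha / 2 - IZR j + 1) * rgamma (alpha / 2 + IZR j + 1).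

(* Main.v *)
Require Import Defs.
From Stdlib Require Import Reals.
From Coquelicot Require Import Coquelicot.
From Stdlib Require Import Arith ZArith Lra Lia.
Open Scope R_scope.

Definition T (y : R) (n : nat) : R :=
  pochhammer_succ y n / (INR (fact n) * Rpower (INR n) y).

Lemma rgamma_lim y (l : R) : is_lim_seq (T y) l -> rgamma y = l.
Proof. intro H. unfold rgamma. change (real (Lim_seq (T y)) = l).
  rewrite (is_lim_seq_unique _ _ H). reflexivity. Qed.

Lemma poch_rec y n : pochhammer_succ y n * (y + INR n + 1) = y * pochhammer_succ (y+1) n.
Proof. induction n as [|n IH].
- simpl. ring.
- cbn [pochhammer_succ]. rewrite S_INR.
  transitivity ((pochhammer_succ y n * (y + INR n + 1)) * (y + INR n + 2)). ring.
  rewrite IH. ring. Qed.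

Lemma Rpower_pos a b : 0 < Rpower a b.
Proof. unfold Rpower. apply exp_pos. Qed.

Lemma T_rec y n : (1 <= n)%nat -> T y n * (y + INR n + 1) = y * INR n * T (y+1) n.
Proof. intro Hn. unfold T.
  assert (Hn0 : 0 < INR n) by (apply lt_0_INR; lia).
  rewrite Rpower_plus, Rpower_1 by exact Hn0.
  pose proof (INR_fact_neq_0 n). pose proof (Rpower_pos (INR n) y).
  replace (pochhammer_succ y n / (INR (fact n) * Rpower (INR n) y) * (y + INR n + 1))
    with ((pochhammer_succ y n * (y + INR n + 1)) / (INR (fact n) * Rpower (INR n) y))
    by (field; split; lra).
  rewrite poch_rec. field. repeat split; lra. Qed.

Lemma lim_ratio a b : is_lim_seq (fun n => (INR n + a) / (INR n + b)) 1.
Proof.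
  assert (H0 : is_lim_seq (fun n => / INR n) 0).
  { replace (Finite 0) with (Rbar_inv p_infty) by reflexivity.
    apply is_lim_seq_inv. apply is_lim_seq_INR. discriminate. }
  assert (Ha : is_lim_seq (fun n => 1 + a * / INR n) 1).
  { pose proof (is_lim_seq_plus' _ _ _ _ (is_lim_seq_const 1)
      (is_lim_seq_mult' _ _ _ _ (is_lim_seq_const a) H0)) as K.
    replace (1 + a * 0) with 1 in K by ring. exact K. }
  assert (Hb : is_lim_seq (fun n => 1 + b * / INR n) 1).
  { pose proof (is_lim_seq_plus' _ _ _ _ (is_lim_seq_const 1)
      (is_lim_seq_mult' _ _ _ _ (is_lim_seq_const b) H0)) as K.
    replace (1 + b * 0) with 1 in K by ring. exact K. }
  pose proof (is_lim_seq_div' _ _ _ _ Ha Hb ltac:(lra)) as H.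
  replace (1/1) with 1 in H by field.
  apply is_lim_seq_ext_loc with (2 := H).
  exists 1%nat. intros n Hn. assert (0 < INR n) by (apply lt_0_INR; lia).
  destruct (Req_dec (INR n + b) 0) as [E|E].
  -
    assert (E2 : 1 + b * / INR n = 0).
    { replace (1 + b * / INR n) with ((INR n + b) / INR n) by (field; lra). rewrite E. field; lra. }
    rewrite E, E2. unfold Rdiv. rewrite !Rinv_0. ring.
  - assert (E2 : 1 + b * / INR n <> 0).
    { intro C. apply E.
      replace (INR n + b) with (INR n * (1 + b * / INR n)) by (field; lra). rewrite C; ring. }
    field. repeat split; lra.
Qed.

Lemma lim_down y (l : R) : is_lim_seq (T (y+1)) l -> is_lim_seq (T y) (y*l).
Proof. intro H.
  assert (H2 := is_lim_seq_mult' _ _ _ _ (is_lim_seq_scal_l _ y _ H) (lim_ratio 0 (y+1))).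
  simpl in H2. replace (y*l*1) with (y*l) in H2 by ring.
  apply is_lim_seq_ext_loc with (2 := H2).
  destruct (archimed (Rabs y)) as [Hup _].
  exists (S (Z.to_nat (up (Rabs y)))). intros n Hn.
  assert (Hn1 : (1 <= n)%nat) by lia.
  assert (HN : Rabs y < INR n).
  { apply Rlt_le_trans with (IZR (up (Rabs y))); [exact Hup|].
    assert (0 <= up (Rabs y))%Z.
    { apply le_IZR. pose proof (Rabs_pos y). simpl. lra. }
    rewrite <- (Z2Nat.id (up (Rabs y))) by exact H0. rewrite <- INR_IZR_INZ.
    apply le_INR. lia. }
  pose proof (Rle_abs (-y)). rewrite Rabs_Ropp in H0.
  pose proof (T_rec y n Hn1).
  assert (INR n + (y + 1) <> 0) by lra.
  replace (T y n) with (T y n * (y + INR n + 1) / (INR n + (y+1))) by (field; lra).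
  rewrite H1. field. exact H3.
Qed.

Lemma lim_up y (l : R) : y <> 0 -> is_lim_seq (T y) l -> is_lim_seq (T (y+1)) (l/y).
Proof. intros Hy H.
  assert (H2 := is_lim_seq_mult' _ _ _ _ (is_lim_seq_scal_l _ (/y) _ H) (lim_ratio (y+1) 0)).
  simpl in H2. replace (/ y * l * 1) with (l/y) in H2 by (field; auto).
  apply is_lim_seq_ext_loc with (2 := H2).
  exists 1%nat. intros n Hn.
  assert (0 < INR n) by (apply lt_0_INR; lia).
  pose proof (T_rec y n Hn).
  replace (T (y+1) n) with (y * INR n * T (y + 1) n / (y * INR n)) by (field; split; lra).
  rewrite <- H1. field. split; lra.
Qed.

Definition F (x : R) (n : nat) (t : R) : R := cos (2*x*t) * cos t ^ n.

Lemma F_cont x n t : continuous (F x n) t.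
Proof. apply (ex_derive_continuous (V := R_NormedModule) (F x n)). unfold F. auto_derive. auto. Qed.

Lemma F_int x n : ex_RInt (F x n) 0 (PI/2).
Proof. apply (ex_RInt_continuous (V := R_CompleteNormedModule)). intros; apply F_cont. Qed.

Definition J x n := RInt (F x n) 0 (PI/2).

Lemma J_is x n : is_RInt (F x n) 0 (PI/2) (J x n).
Proof. unfold J. apply (RInt_correct (V := R_CompleteNormedModule)). apply F_int. Qed.

Lemma J_rec x n :
  (INR (S (S n)) ^ 2 - 4 * x ^ 2) * J x (S (S n)) = INR (S (S n)) * INR (S n) * J x n.
Proof.
  set (N := INR (S (S n))).
  set (H := fun t => N * cos t ^ (S n) * sin t * cos (2*x*t) - 2*x*sin (2*x*t) * cos t ^ (S (S n))).
  set (h := fun t => (N^2 - 4*x^2) * F x (S (S n)) t - N * INR (S n) * F x n t).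
  assert (Hd : forall t, is_derive H t (h t)).
  { intro t. unfold H, h, F. auto_derive. auto.
    change (match n with | 0%nat => 1 | S _ => INR n + 1 end) with (INR (S n)).
    unfold N. rewrite (S_INR (S n)). set (m := INR (S n)).
    pose proof (sin2_cos2 t) as E. unfold Rsqr in E.
    apply Rminus_diag_uniq.
    transitivity (-(m+1)*m*cos t ^ n * cos (2*x*t) * (sin t * sin t + cos t * cos t - 1)).
    simpl; ring. rewrite E; ring. }
  assert (I1 : is_RInt h 0 (PI/2) (minus (H (PI/2)) (H 0))).
  { apply (is_RInt_derive (V := R_CompleteNormedModule)).
    intros; apply Hd.
    intros t _. apply (ex_derive_continuous (V := R_NormedModule) h).
    unfold h, F. auto_derive. auto. }
  assert (I2 : is_RInt h 0 (PI/2)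
     (minus (scal (N^2 - 4*x^2) (J x (S (S n)))) (scal (N * INR (S n)) (J x n)))).
  { eapply is_RInt_ext; [| apply (is_RInt_minus (V:=R_NormedModule));
      apply (is_RInt_scal (V:=R_NormedModule)); apply J_is].
    intros t _. unfold h. reflexivity. }
  apply (is_RInt_unique (V:=R_CompleteNormedModule)) in I1.
  apply (is_RInt_unique (V:=R_CompleteNormedModule)) in I2.
  rewrite I1 in I2.
  assert (H0 : H (PI/2) = 0).
  { unfold H. rewrite cos_PI2. simpl. ring. }
  assert (H00 : H 0 = 0).
  { unfold H. rewrite Rmult_0_r, sin_0. ring. }
  rewrite H0, H00 in I2. unfold minus, plus, opp, scal in I2; simpl in I2.
  unfold mult in I2; simpl in I2. unfold N in *. simpl in *. lra.
Qed.

Lemma J_x0 x : x <> 0 -> J x 0 = sin (PI * x) / (2 * x).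
Proof. intro Hx.
  set (G := fun t => sin (2*x*t) / (2*x)).
  assert (I1 : is_RInt (F x 0) 0 (PI/2) (minus (G (PI/2)) (G 0))).
  { apply (is_RInt_derive (V := R_CompleteNormedModule)).
    - intros t _. unfold G, F. auto_derive. auto. simpl. field. auto.
    - intros t _. apply F_cont. }
  apply (is_RInt_unique (V:=R_CompleteNormedModule)) in I1. unfold J. rewrite I1.
  unfold G, minus, plus, opp; simpl. rewrite Rmult_0_r, sin_0.
  replace (2 * x * (PI / 2)) with (PI * x) by field. field. auto.
Qed.

Lemma J_00 : J 0 0 = PI / 2.
Proof.
  assert (I1 : is_RInt (F 0 0) 0 (PI/2) (minus (PI/2) 0)).
  { apply (is_RInt_derive (V := R_CompleteNormedModule) (fun t => t)).
    - intros t _. unfold F. auto_derive. auto. replace (2 * 0 * t) with 0 by ring. rewrite cos_0. ring.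
    - intros t _. apply F_cont. }
  apply (is_RInt_unique (V:=R_CompleteNormedModule)) in I1. unfold J. rewrite I1.
  unfold minus, plus, opp; simpl. ring.
Qed.

Fixpoint pr1 (f : nat -> R) (n : nat) : R :=
  match n with O => 1 | S m => pr1 f m * f (S m) end.

Lemma pr1_mult f g n : pr1 (fun k => f k * g k) n = pr1 f n * pr1 g n.
Proof. induction n; simpl; [ring|rewrite IHn; ring]. Qed.

Lemma pr1_ext f g n : (forall k, (1 <= k)%nat -> f k = g k) -> pr1 f n = pr1 g n.
Proof. intro H. induction n; simpl; [reflexivity|]. rewrite IHn, H by lia. reflexivity. Qed.

Lemma pr1_pos f n : (forall k, (1 <= k)%nat -> 0 < f k) -> 0 < pr1 f n.
Proof. intro H. induction n; simpl; [lra|]. apply Rmult_lt_0_compat; auto. apply H; lia. Qed.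

Lemma J_claim x m :
  J x (2*m) * pr1 (fun k => 4 * INR k ^ 2 - 4 * x ^ 2) m
  = pr1 (fun k => 2 * INR k * (2 * INR k - 1)) m * J x 0.
Proof. induction m as [|m IH].
- simpl. ring.
- replace (2 * S m)%nat with (S (S (2*m))) by lia.
  cbn [pr1].
  pose proof (J_rec x (2*m)) as R.
  replace (INR (S (S (2*m)))) with (2 * INR (S m)) in R
    by (rewrite !S_INR, mult_INR; simpl; ring).
  replace (INR (S (2*m))) with (2 * INR (S m) - 1) in R
    by (rewrite !S_INR, mult_INR; simpl; ring).
  transitivity ((((2 * INR (S m)) ^ 2 - 4 * x ^ 2) * J x (S (S (2 * m))))
     * pr1 (fun k : nat => 4 * INR k ^ 2 - 4 * x ^ 2) m). ring.
  rewrite R. transitivity (2 * INR (S m) * (2 * INR (S m) - 1) *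
    (J x (2 * m) * pr1 (fun k : nat => 4 * INR k ^ 2 - 4 * x ^ 2) m)). ring.
  rewrite IH. ring.
Qed.

Lemma sine_bound x m : 0 < x < 1 ->
  sin (PI * x) / PI <= x * pr1 (fun k => 1 - x ^ 2 / INR k ^ 2) m.
Proof. intros [Hx0 Hx1].
  assert (Hle : J x (2*m) <= J 0 (2*m)).
  { apply (is_RInt_le (F x (2*m)) (F 0 (2*m)) 0 (PI/2)).
    pose proof PI_RGT_0; lra. apply J_is. apply J_is.
    intros t _. unfold F. replace (2*0*t) with 0 by ring. rewrite cos_0.
    assert (0 <= cos t ^ (2*m)) by (rewrite pow_mult; apply pow_le; nra).
    pose proof (COS_bound (2*x*t)). nra. }
  pose proof (J_claim x m) as Cx. pose proof (J_claim 0 m) as C0.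
  rewrite J_x0 in Cx by lra. rewrite J_00 in C0.
  set (P := pr1 (fun k => 2 * INR k * (2 * INR k - 1)) m) in *.
  set (S := pr1 (fun k => 1 - x ^ 2 / INR k ^ 2) m).
  set (D := pr1 (fun k => 4 * INR k ^ 2) m).
  assert (HP : 0 < P).
  { apply pr1_pos. intros k Hk. assert (1 <= INR k) by (replace 1 with (INR 1) by reflexivity; apply le_INR; lia). nra. }
  assert (HD : 0 < D).
  { apply pr1_pos. intros k Hk. assert (1 <= INR k) by (replace 1 with (INR 1) by reflexivity; apply le_INR; lia). nra. }
  assert (HS : 0 < S).
  { apply pr1_pos. intros k Hk. assert (1 <= INR k) by (replace 1 with (INR 1) by reflexivity; apply le_INR; lia).
    assert (x^2 / INR k ^2 < 1). { apply Rmult_lt_reg_r with (INR k ^ 2). nra. field_simplify; nra. } lra. }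
  assert (EQ : pr1 (fun k => 4 * INR k ^ 2 - 4 * x ^ 2) m = D * S).
  { unfold D, S. rewrite <- pr1_mult. apply pr1_ext. intros k Hk.
    assert (1 <= INR k) by (replace 1 with (INR 1) by reflexivity; apply le_INR; lia). field. lra. }
  assert (EQ0 : pr1 (fun k => 4 * INR k ^ 2 - 4 * 0 ^ 2) m = D).
  { unfold D. apply pr1_ext. intros; ring. }
  rewrite EQ in Cx. rewrite EQ0 in C0.
  pose proof PI_RGT_0.
  assert (HJ : J x (2*m) * (D*S) <= J 0 (2*m) * (D*S)).
  { apply Rmult_le_compat_r; [nra|exact Hle]. }
  rewrite Cx in HJ.
  replace (J 0 (2 * m) * (D * S)) with ((J 0 (2*m) * D) * S) in HJ by ring.
  rewrite C0 in HJ.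
  assert (sin (PI * x) / (2 * x) <= PI / 2 * S).
  { apply Rmult_le_reg_l with P. exact HP. nra. }
  replace (sin (PI*x)/PI) with ((sin(PI*x)/(2*x)) * (2*x/PI)) by (field; lra).
  replace (x*S) with ((PI/2*S)*(2*x/PI)) by (field; lra).
  apply Rmult_le_compat_r. apply Rlt_le, Rdiv_lt_0_compat; lra. assumption.
Qed.

Lemma poch_pos y n : 0 < y -> 0 < pochhammer_succ y n.
Proof. intro H. induction n; cbn [pochhammer_succ]; [lra|].
  apply Rmult_lt_0_compat; auto. pose proof (pos_INR (S n)); lra. Qed.

Lemma T_pos y n : 0 < y -> 0 < T y n.
Proof. intro H. unfold T. apply Rdiv_lt_0_compat. apply poch_pos; auto.
  apply Rmult_lt_0_compat. apply INR_fact_lt_0. apply Rpower_pos. Qed.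

Lemma ln_le1 z : 0 < z -> ln z <= z - 1.
Proof. intro H. pose proof (exp_ineq1_le (ln z)). rewrite exp_ln in H0 by auto. lra. Qed.

Lemma T_decr y n : 0 < y -> (1 <= n)%nat -> T y (S n) <= T y n.
Proof. intros Hy Hn. unfold T.
  assert (Hn0 : 0 < INR n) by (apply lt_0_INR; lia).
  cbn [pochhammer_succ]. rewrite S_INR.
  change (fact (S n)) with (S n * fact n)%nat. rewrite mult_INR, S_INR.
  pose proof (INR_fact_lt_0 n). pose proof (poch_pos y n Hy) as Hp.
  set (p := pochhammer_succ y n) in *. set (f := INR (fact n)) in *.
  assert (E : Rpower (INR n + 1) y = Rpower (INR n) y * Rpower ((INR n + 1)/INR n) y).
  { rewrite Rpower_mult_distr. f_equal. field. lra. lra. apply Rdiv_lt_0_compat; lra. }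
  assert (L : 1 / (INR n + 1) <= ln ((INR n + 1) / INR n)).
  { pose proof (ln_le1 (INR n / (INR n + 1)) ltac:(apply Rdiv_lt_0_compat; lra)).
    replace ((INR n + 1) / INR n) with (/ (INR n / (INR n + 1))) by (field; lra).
    rewrite ln_Rinv by (apply Rdiv_lt_0_compat; lra).
    replace (INR n / (INR n + 1) - 1) with (- (1/(INR n + 1))) in H0 by (field; lra). lra. }
  assert (B : 1 + y / (INR n + 1) <= Rpower ((INR n + 1)/INR n) y).
  { unfold Rpower. eapply Rle_trans; [|apply exp_ineq1_le].
    replace (y / (INR n + 1)) with (y * (1/(INR n+1))) by (field; lra). nra. }
  rewrite E. set (r := Rpower (INR n) y). set (q := Rpower ((INR n + 1) / INR n) y).
  assert (0 < r) by apply Rpower_pos.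
  assert (0 < q) by apply Rpower_pos.
  unfold Rdiv. rewrite !Rinv_mult.
  apply Rmult_le_reg_r with (f * r). nra.
  replace (p * / f * / r * (f * r)) with p by (field; lra).
  replace (p * (y + (INR n + 1)) * (/ (INR n + 1) * / f * (/ r * / q)) * (f * r))
    with (p * ((y + (INR n + 1)) / ((INR n + 1) * q))) by (field; repeat split; lra).
  replace (p * (/ f * / r) * (f * r)) with (p*1) by (field; lra). apply Rmult_le_compat_l. lra.
  apply Rmult_le_reg_r with ((INR n + 1) * q). nra.
  replace ((y + (INR n + 1)) / ((INR n + 1) * q) * ((INR n + 1) * q)) with (y + (INR n + 1))
    by (field; split; lra).
  replace (y / (INR n + 1)) with (y * / (INR n + 1)) in B by reflexivity.
  assert ((INR n + 1) * (1 + y * / (INR n + 1)) = y + (INR n + 1)) by (field; lra).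
  fold q in B. rewrite <- H2, Rmult_1_l. apply Rmult_le_compat_l; [lra|exact B].
Qed.

Lemma T_conv y : 0 < y -> exists l : R, is_lim_seq (T y) l /\ 0 <= l.
Proof. intro Hy.
  destruct (ex_finite_lim_seq_decr (fun n => T y (S n)) 0) as [l Hl].
  - intro n. apply T_decr; auto; lia.
  - intro n. apply Rlt_le, T_pos; auto.
  - exists l. split. apply is_lim_seq_incr_1. exact Hl.
    apply (is_lim_seq_le (fun _ => 0) (fun n => T y (S n)) 0 l).
    intro n; apply Rlt_le, T_pos; auto. apply is_lim_seq_const. exact Hl.
Qed.

Lemma poch_pair y n : pochhammer_succ y n * pochhammer_succ (1-y) n
  = y * (INR n + 1 - y) * pr1 (fun k => INR k ^ 2 - y ^ 2) n.
Proof. induction n as [|n IH].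
- simpl. ring.
- cbn [pochhammer_succ pr1].
  transitivity ((pochhammer_succ y n * pochhammer_succ (1 - y) n) * (y + INR (S n)) * (1 - y + INR (S n))). ring.
  rewrite IH, !S_INR. ring.
Qed.

Lemma fact_pr1 n : INR (fact n) = pr1 (fun k => INR k) n.
Proof. induction n; [reflexivity|]. change (fact (S n)) with (S n * fact n)%nat.
  rewrite mult_INR, IHn. cbn [pr1]. ring. Qed.

Lemma TT_prod y n : (1 <= n)%nat ->
  T y n * T (1-y) n = y * (INR n + 1 - y) / INR n * pr1 (fun k => 1 - y ^ 2 / INR k ^ 2) n.
Proof. intro Hn. unfold T.
  assert (Hn0 : 0 < INR n) by (apply lt_0_INR; lia).
  assert (E1 : Rpower (INR n) y * Rpower (INR n) (1-y) = INR n).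
  { rewrite <- Rpower_plus. replace (y + (1-y)) with 1 by ring. apply Rpower_1; auto. }
  assert (E2 : pr1 (fun k => INR k ^ 2 - y ^ 2) n
    = INR (fact n) * INR (fact n) * pr1 (fun k => 1 - y ^ 2 / INR k ^ 2) n).
  { rewrite fact_pr1, <- !pr1_mult. apply pr1_ext. intros k Hk.
    assert (0 < INR k) by (apply lt_0_INR; lia). field. lra. }
  pose proof (INR_fact_lt_0 n). pose proof (Rpower_pos (INR n) y). pose proof (Rpower_pos (INR n) (1-y)).
  transitivity ((pochhammer_succ y n * pochhammer_succ (1-y) n) /
     (INR (fact n) * INR (fact n) * (Rpower (INR n) y * Rpower (INR n) (1-y)))).
  field. repeat split; lra.
  rewrite poch_pair, E1, E2. field. repeat split; lra.
Qed.

Lemma pr1_le1 f n : (forall k, (1 <= k)%nat -> 0 <= f k <= 1) -> 0 <= pr1 f n <= 1.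
Proof. intro H. induction n; simpl; [lra|]. specialize (H (S n) ltac:(lia)). nra. Qed.

Lemma lim_le (u v : nat -> R) (l1 l2 : R) : (forall n, u n <= v n) ->
  is_lim_seq u l1 -> is_lim_seq v l2 -> l1 <= l2.
Proof. intros H H1 H2. exact (is_lim_seq_le u v l1 l2 H H1 H2). Qed.

Lemma pr1_le_first f n : (forall k, (1 <= k)%nat -> 0 <= f k <= 1) -> pr1 f (S n) <= f 1%nat.
Proof. intro H. induction n. simpl. lra.
  change (pr1 f (S n) * f (S (S n)) <= f 1%nat).
  pose proof (pr1_le1 f (S n) H). specialize (H (S (S n)) ltac:(lia)). nra. Qed.

Lemma refl y : 0 < y < 1 -> exists a b : R,
  is_lim_seq (T y) a /\ is_lim_seq (T (1-y)) b /\ 0 < a /\ 0 < b /\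
  sin (PI * y) / PI <= a * b <= y * (1 - y ^ 2).
Proof. intros [H0 H1].
  destruct (T_conv y H0) as [a [Ha Ha0]].
  destruct (T_conv (1-y) ltac:(lra)) as [b [Hb Hb0]].
  pose proof (is_lim_seq_mult' _ _ _ _ Ha Hb) as Hab.
  assert (Hs : 0 < sin (PI * y) / PI).
  { pose proof PI_RGT_0. apply Rdiv_lt_0_compat; auto. apply sin_gt_0; nra. }
  assert (Lo : sin (PI * y) / PI <= a * b).
  { apply (lim_le (fun _ => sin (PI*y)/PI) (fun n => T y (S n) * T (1-y) (S n))).
    - intro n. rewrite TT_prod by lia. pose proof (sine_bound y (S n) (conj H0 H1)).
      assert (0 < INR (S n)) by (apply lt_0_INR; lia).
      assert (0 <= pr1 (fun k => 1 - y ^ 2 / INR k ^ 2) (S n)).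
      { apply Rlt_le, pr1_pos. intros k Hk. assert (1 <= INR k) by (replace 1 with (INR 1) by reflexivity; apply le_INR; lia).
        assert (y^2 / INR k ^2 < 1). { apply Rmult_lt_reg_r with (INR k ^ 2). nra. field_simplify; nra. } lra. }
      replace (y * (INR (S n) + 1 - y) / INR (S n) * pr1 (fun k => 1 - y ^ 2 / INR k ^ 2) (S n))
        with ((y * pr1 (fun k => 1 - y ^ 2 / INR k ^ 2) (S n)) * ((INR (S n) + 1 - y) / INR (S n))) by (field; lra).
      apply Rle_trans with (y * pr1 (fun k => 1 - y ^ 2 / INR k ^ 2) (S n)); auto.
      rewrite <- (Rmult_1_r (y * pr1 _ _)) at 1. apply Rmult_le_compat_l. nra.
      apply Rmult_le_reg_r with (INR (S n)); auto. field_simplify; lra.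
    - apply is_lim_seq_const.
    - apply -> (is_lim_seq_incr_1 (fun n => T y n * T (1-y) n)). exact Hab. }
  assert (Up : a * b <= y * (1 - y ^ 2)).
  { apply (lim_le (fun n => T y (S n) * T (1-y) (S n))
       (fun n => y * (1 - y^2) * ((INR (S n) + (1 - y)) / (INR (S n) + 0)))).
    - intro n. rewrite TT_prod by lia.
      assert (0 < INR (S n)) by (apply lt_0_INR; lia).
      assert (E1 : forall k, (1 <= k)%nat -> 0 <= 1 - y ^ 2 / INR k ^ 2 <= 1).
      { intros k Hk. assert (1 <= INR k) by (replace 1 with (INR 1) by reflexivity; apply le_INR; lia).
        assert (y^2 / INR k ^2 <= 1). { apply Rmult_le_reg_r with (INR k ^ 2). nra. field_simplify; nra. }
        assert (0 <= y^2 / INR k ^2). { apply Rmult_le_pos. nra. apply Rlt_le, Rinv_0_lt_compat. nra. } lra. }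
      pose proof (pr1_le_first _ n E1) as Hp. pose proof (pr1_le1 _ (S n) E1) as [P0 P1].
      cbv beta in Hp. replace (1 - y ^ 2 / INR 1 ^ 2) with (1 - y^2) in Hp by (simpl; field).
      replace (y * (INR (S n) + 1 - y) / INR (S n) * pr1 (fun k => 1 - y ^ 2 / INR k ^ 2) (S n))
        with ((y * (INR (S n) + (1 - y)) / (INR (S n) + 0)) * pr1 (fun k => 1 - y ^ 2 / INR k ^ 2) (S n))
        by (field; lra).
      replace (y * (1 - y ^ 2) * ((INR (S n) + (1 - y)) / (INR (S n) + 0)))
        with ((y * (INR (S n) + (1 - y)) / (INR (S n) + 0)) * (1 - y^2)) by (field; lra).
      apply Rmult_le_compat_l; [|exact Hp].
      apply Rmult_le_pos. nra. apply Rlt_le, Rinv_0_lt_compat. lra.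
    - apply -> (is_lim_seq_incr_1 (fun n => T y n * T (1-y) n)). exact Hab.
    - replace (Finite (y * (1 - y^2))) with (Rbar_mult (y * (1 - y^2)) 1) by (simpl; f_equal; ring).
      apply is_lim_seq_scal_l. apply -> (is_lim_seq_incr_1 (fun n => (INR n + (1 - y)) / (INR n + 0))).
      apply lim_ratio. }
  exists a, b. repeat split; auto.
  - destruct (Req_dec a 0) as [E|E]; [|lra]. rewrite E in Lo. lra.
  - destruct (Req_dec b 0) as [E|E]; [|lra]. rewrite E in Lo. lra.
Qed.

Lemma T_arg y z (l : R) : y = z -> is_lim_seq (T y) l -> is_lim_seq (T z) l.
Proof. intros ->; auto. Qed.

Lemma chain x (a b : R) : 0 < x < 1 -> is_lim_seq (T x) a -> is_lim_seq (T (1-x)) b ->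
  0 < a -> 0 < b -> forall j, (1 <= j)%nat -> exists l1 l2 l3 : R,
  is_lim_seq (T (x + 1 - INR j)) l1 /\ is_lim_seq (T (INR j - x)) l2 /\
  is_lim_seq (T (INR j + x)) l3 /\ 0 < l2 /\ 0 < l3 /\ Rabs l1 * l2 = a * b.
Proof. intros Hx Ha Hb Ha0 Hb0 j Hj.
  destruct j as [|j]; [lia|]. clear Hj. induction j as [|j IH].
  - exists a, b, (a/x). repeat split.
    + replace (x + 1 - INR 1) with x by (simpl; ring). exact Ha.
    + replace (INR 1 - x) with (1 - x) by (simpl; ring). exact Hb.
    + replace (INR 1 + x) with (x + 1) by (simpl; ring). apply lim_up; auto. lra.
    + auto.
    + apply Rdiv_lt_0_compat; lra.
    + rewrite Rabs_pos_eq; lra.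
  - destruct IH as [l1 [l2 [l3 [H1 [H2 [H3 [P2 [P3 E]]]]]]]].
    set (J := INR (S j)) in *.
    assert (HJ : 1 <= J) by (unfold J; replace 1 with (INR 1) by reflexivity; apply le_INR; lia).
    assert (ES : INR (S (S j)) = J + 1) by (unfold J; rewrite S_INR; ring).
    exists ((x - J) * l1), (l2 / (J - x)), (l3 / (J + x)). repeat split.
    + replace (x + 1 - INR (S (S j))) with (x - J) by (rewrite ES; ring). apply lim_down.
      replace (x - J + 1) with (x + 1 - J) by ring. exact H1.
    + replace (INR (S (S j)) - x) with ((J - x) + 1) by (rewrite ES; ring). apply lim_up. lra. auto.
    + replace (INR (S (S j)) + x) with ((J + x) + 1) by (rewrite ES; ring). apply lim_up. lra. auto.
    + apply Rdiv_lt_0_compat; lra.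
    + apply Rdiv_lt_0_compat; lra.
    + rewrite Rabs_mult, (Rabs_left (x - J)) by lra. rewrite <- E. field. lra.
Qed.

Lemma gam_facts x (a b : R) : 0 < x < 1 -> is_lim_seq (T x) a -> is_lim_seq (T (1-x)) b ->
  0 < a -> 0 < b -> forall N, (1 <= N)%nat ->
  0 < rgamma (INR N + x) /\ 0 < rgamma (INR N - x) /\
  rgamma (INR N + x) = (INR N + x) * rgamma (INR N + x + 1) /\
  rgamma (INR N - x) = (INR N - x) * rgamma (INR N - x + 1) /\
  Rabs (rgamma (x + 1 - INR N)) * rgamma (INR N - x) = a * b.
Proof. intros Hx Ha Hb Ha0 Hb0 N HN.
  destruct (chain x a b Hx Ha Hb Ha0 Hb0 N HN) as [l1 [l2 [l3 [H1 [H2 [H3 [P2 [P3 E]]]]]]]].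
  assert (HNr : 1 <= INR N) by (replace 1 with (INR 1) by reflexivity; apply le_INR; lia).
  rewrite (rgamma_lim _ _ H1), (rgamma_lim _ _ H2), (rgamma_lim _ _ H3).
  pose proof (lim_up (INR N + x) l3 ltac:(intro; lra) H3) as H3'.
  pose proof (lim_up (INR N - x) l2 ltac:(intro; lra) H2) as H2'.
  rewrite (rgamma_lim _ _ H3'), (rgamma_lim _ _ H2').
  repeat split; auto; field; lra.
Qed.

Lemma exp_le_exp a b : a <= b -> exp a <= exp b.
Proof. intro H. destruct (Req_dec a b) as [->|E]; [lra|]. apply Rlt_le, exp_increasing. lra. Qed.

Lemma D1 t : 0 <= t < 1 -> 2 * t <= ln ((1 + t) / (1 - t)).
Proof. intros [H0 H1].
  destruct (Req_dec t 0) as [E|E].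
  { subst. replace ((1+0)/(1-0)) with 1 by field. rewrite ln_1. lra. }
  set (f := fun u => ln (1 + u) - ln (1 - u) - 2 * u).
  set (df := fun u => / (1 + u) + / (1 - u) - 2).
  destruct (MVT_gen f 0 t df) as [c [Hc Eq]].
  - intros u Hu. rewrite Rmin_left, Rmax_right in Hu by lra.
    unfold f, df. auto_derive. lra. field. lra.
  - intros u Hu. rewrite Rmin_left, Rmax_right in Hu by lra.
    apply continuity_pt_filterlim. apply (ex_derive_continuous (V := R_NormedModule) f).
    unfold f. auto_derive. lra.
  - rewrite Rmin_left, Rmax_right in Hc by lra.
    assert (Hdf : 0 <= df c).
    { unfold df. assert (0 < 1 + c) by lra. assert (0 < 1 - c) by lra.
      replace (/ (1 + c) + / (1 - c) - 2) with (2 * c * c / ((1 + c) * (1 - c))) by (field; lra).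
      apply Rmult_le_pos. nra. apply Rlt_le, Rinv_0_lt_compat. nra. }
    unfold f in Eq. replace (1 + 0) with 1 in Eq by ring. replace (1 - 0) with 1 in Eq by ring.
    rewrite ln_1 in Eq. rewrite ln_div by lra. nra.
Qed.

Lemma exp2t t : 0 <= t < 1 -> exp (2 * t) <= (1 + t) / (1 - t).
Proof. intro H. pose proof (D1 t H). rewrite <- (exp_ln ((1 + t) / (1 - t))).
  apply exp_le_exp. auto. apply Rdiv_lt_0_compat; lra. Qed.

Lemma fac_lo m x : 1 <= m -> 0 < x < 1 -> Rpower ((m + 1) / m) (2 * x) <= (m + x) / (m - x).
Proof. intros Hm Hx. unfold Rpower.
  assert (L : ln ((m + 1) / m) <= 1 / m).
  { pose proof (ln_le1 ((m+1)/m) ltac:(apply Rdiv_lt_0_compat; lra)).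
    replace ((m + 1) / m - 1) with (1/m) in H by (field; lra). auto. }
  apply Rle_trans with (exp (2 * (x / m))).
  - apply exp_le_exp. replace (2 * (x/m)) with (2 * x * (1/m)) by (field; lra).
    apply Rmult_le_compat_l; lra.
  - replace ((m + x) / (m - x)) with ((1 + x/m) / (1 - x/m)) by (field; lra).
    apply exp2t. split. apply Rmult_le_pos; [lra|apply Rlt_le, Rinv_0_lt_compat; lra].
    apply Rmult_lt_reg_r with m. lra. field_simplify; lra.
Qed.

Lemma fac_up m x : 0 < x < 1 -> 0 < m - 1 - x -> (m + x) / (m - x) <= Rpower ((m - x) / (m - 1 - x)) (2 * x).
Proof. intros Hx Hm. unfold Rpower.
  assert (L : 1 / (m - x) <= ln ((m - x) / (m - 1 - x))).
  { pose proof (ln_le1 ((m-1-x)/(m-x)) ltac:(apply Rdiv_lt_0_compat; lra)).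
    replace ((m - x) / (m - 1 - x)) with (/ ((m - 1 - x) / (m - x))) by (field; lra).
    rewrite ln_Rinv by (apply Rdiv_lt_0_compat; lra).
    replace ((m - 1 - x) / (m - x) - 1) with (- (1/(m-x))) in H by (field; lra). lra. }
  apply Rle_trans with (exp (2 * x * (1 / (m - x)))).
  - replace ((m + x) / (m - x)) with (1 + 2 * x * (1 / (m - x))) by (field; lra).
    apply exp_ineq1_le.
  - apply exp_le_exp. apply Rmult_le_compat_l; lra.
Qed.

Lemma Rpower_div a b c : 0 < a -> 0 < b -> Rpower a c / Rpower b c = Rpower (a / b) c.
Proof. intros Ha Hb. unfold Rdiv. rewrite <- Rpower_mult_distr; auto.
  f_equal. unfold Rpower. rewrite ln_Rinv, <- exp_Ropp; auto. f_equal; ring.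
  apply Rinv_0_lt_compat; auto. Qed.

Definition Pq (u v : R) (n : nat) := pochhammer_succ u n / pochhammer_succ v n.

Lemma Pq_S u v n : 0 < v -> Pq u v (S n) = Pq u v n * ((u + INR (S n)) / (v + INR (S n))).
Proof. intro Hv. unfold Pq. cbn [pochhammer_succ]. pose proof (poch_pos v n Hv).
  pose proof (pos_INR (S n)). field. split; lra. Qed.

Lemma Pq_lo K x n : 0 < x < 1 -> 1 <= K ->
  Rpower ((K + INR n + 1) / K) (2 * x) <= Pq (K + x) (K - x) n.
Proof. intros Hx HK. induction n as [|n IH].
- unfold Pq. simpl. replace (K + 0 + 1) with (K + 1) by ring. apply fac_lo; auto.
- rewrite Pq_S by lra. pose proof (pos_INR n).
  assert (F := fac_lo (K + INR (S n)) x ltac:(rewrite S_INR; lra) Hx).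
  replace (K + x + INR (S n)) with (K + INR (S n) + x) by ring.
  replace (K - x + INR (S n)) with (K + INR (S n) - x) by ring.
  apply Rle_trans with (Rpower ((K + INR n + 1) / K) (2 * x) * Rpower ((K + INR (S n) + 1) / (K + INR (S n))) (2 * x)).
  + rewrite Rpower_mult_distr. right. f_equal. rewrite !S_INR. field. lra.
    apply Rdiv_lt_0_compat; lra. rewrite S_INR. apply Rdiv_lt_0_compat; lra.
  + apply Rmult_le_compat; auto; apply Rlt_le, Rpower_pos.
Qed.

Lemma Pq_up K x n : 0 < x < 1 -> 0 < K - 1 - x ->
  Pq (K + x) (K - x) n <= Rpower ((K + INR n - x) / (K - 1 - x)) (2 * x).
Proof. intros Hx HK. induction n as [|n IH].
- unfold Pq. simpl. replace (K + 0 - x) with (K - x) by ring. apply fac_up; auto.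
- rewrite Pq_S by lra. pose proof (pos_INR n).
  assert (F := fac_up (K + INR (S n)) x Hx ltac:(rewrite S_INR; lra)).
  replace (K + x + INR (S n)) with (K + INR (S n) + x) by ring.
  replace (K - x + INR (S n)) with (K + INR (S n) - x) by ring.
  apply Rle_trans with (Rpower ((K + INR n - x) / (K - 1 - x)) (2 * x) * Rpower ((K + INR (S n) - x) / (K + INR (S n) - 1 - x)) (2 * x)).
  + apply Rmult_le_compat; auto.
    unfold Pq. apply Rlt_le, Rdiv_lt_0_compat; apply poch_pos; lra.
    apply Rlt_le, Rdiv_lt_0_compat; rewrite S_INR; lra.
  + rewrite Rpower_mult_distr. right. f_equal. rewrite !S_INR. field. split; lra.
    apply Rdiv_lt_0_compat; lra. rewrite S_INR. apply Rdiv_lt_0_compat; lra.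
Qed.

Lemma E_form K x n : 0 < x -> x < K -> (1 <= n)%nat ->
  T (K + x) n / T (K - x) n = Pq (K + x) (K - x) n / Rpower (INR n) (2 * x).
Proof. intros Hx HK Hn. unfold T, Pq.
  assert (0 < INR n) by (apply lt_0_INR; lia).
  replace (K + x) with ((K - x) + 2 * x) at 2 by ring. rewrite Rpower_plus.
  pose proof (INR_fact_lt_0 n). pose proof (Rpower_pos (INR n) (K - x)). pose proof (Rpower_pos (INR n) (2*x)).
  pose proof (poch_pos (K - x) n ltac:(lra)).
  field. repeat split; lra.
Qed.

Lemma lim_Rpower (u : nat -> R) c : is_lim_seq u 1 -> is_lim_seq (fun n => Rpower (u n) c) 1.
Proof. intro H.
  assert (C : continuity_pt (fun z => exp (c * ln z)) 1).
  { apply continuity_pt_filterlim. apply (ex_derive_continuous (V := R_NormedModule) (fun z => exp (c * ln z))).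
    auto_derive. lra. }
  pose proof (is_lim_seq_continuous _ _ _ C H) as K. simpl in K. rewrite ln_1, Rmult_0_r, exp_0 in K.
  exact K.
Qed.

Lemma V_bounds x K : 0 < x < 1 -> (2 <= K)%nat -> 0 < rgamma (INR K - x) ->
  / Rpower (INR K) (2 * x) <= rgamma (INR K + x) / rgamma (INR K - x) <= / Rpower (INR K - 1 - x) (2 * x).
Proof. intros Hx HK Hr.
  assert (HKr : 2 <= INR K) by (replace 2 with (INR 2) by reflexivity; apply le_INR; lia).
  destruct (T_conv (INR K + x) ltac:(lra)) as [l3 [H3 _]].
  destruct (T_conv (INR K - x) ltac:(lra)) as [l2 [H2 _]].
  rewrite (rgamma_lim _ _ H3), (rgamma_lim _ _ H2) in *.
  pose proof (is_lim_seq_div' _ _ _ _ H3 H2 ltac:(lra)) as HE.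
  apply -> is_lim_seq_incr_1 in HE.
  split.
  - apply (lim_le (fun _ => / Rpower (INR K) (2 * x)) (fun n => T (INR K + x) (S n) / T (INR K - x) (S n))).
    + intro n. rewrite E_form by (lra || lia).
      pose proof (Pq_lo (INR K) x (S n) Hx ltac:(lra)).
      assert (0 < INR (S n)) by (apply lt_0_INR; lia).
      pose proof (Rpower_pos (INR (S n)) (2*x)).
      apply Rle_trans with (Rpower ((INR K + INR (S n) + 1) / INR K) (2 * x) / Rpower (INR (S n)) (2 * x)).
      * rewrite Rpower_div; [| apply Rdiv_lt_0_compat; lra | lra].
        replace (/ Rpower (INR K) (2 * x)) with (Rpower 1 (2*x) / Rpower (INR K) (2 * x)) by
          (unfold Rpower at 1; rewrite ln_1, Rmult_0_r, exp_0; field; apply Rgt_not_eq, Rpower_pos).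
        rewrite Rpower_div by lra.
        apply Rle_Rpower_l. lra. split. apply Rdiv_lt_0_compat; lra.
        rewrite S_INR in *. pose proof (pos_INR n).
        apply Rmult_le_reg_r with (INR K * (INR n + 1)). nra. field_simplify; nra.
      * apply Rmult_le_compat_r. apply Rlt_le, Rinv_0_lt_compat; lra. auto.
    + apply is_lim_seq_const.
    + exact HE.
  - apply (lim_le (fun n => T (INR K + x) (S n) / T (INR K - x) (S n))
       (fun n => Rpower ((INR (S n) + (INR K - x)) / (INR (S n) + 0)) (2 * x) / Rpower (INR K - 1 - x) (2 * x))).
    + intro n. rewrite E_form by (lra || lia).
      pose proof (Pq_up (INR K) x (S n) Hx ltac:(lra)).
      assert (0 < INR (S n)) by (apply lt_0_INR; lia).
      pose proof (Rpower_pos (INR (S n)) (2*x)).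
      apply Rle_trans with (Rpower ((INR K + INR (S n) - x) / (INR K - 1 - x)) (2 * x) / Rpower (INR (S n)) (2 * x)).
      * apply Rmult_le_compat_r. apply Rlt_le, Rinv_0_lt_compat; lra. auto.
      * rewrite !Rpower_div; try (apply Rdiv_lt_0_compat; lra); try lra.
        right. f_equal. field. lra.
    + exact HE.
    + replace (Finite (/ Rpower (INR K - 1 - x) (2 * x))) with (Finite (1 / Rpower (INR K - 1 - x) (2 * x)))
        by (f_equal; field; apply Rgt_not_eq, Rpower_pos).
      apply is_lim_seq_div'. 2: apply is_lim_seq_const. 2: apply Rgt_not_eq, Rpower_pos.
      apply lim_Rpower. apply -> (is_lim_seq_incr_1 (fun n => (INR n + (INR K - x)) / (INR n + 0))).
      apply lim_ratio.
Qed.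

Lemma sin_lb_eq a : sin_lb a = a - a^3/6 + a^5/120 - a^7/5040.
Proof. unfold sin_lb, sin_approx. cbn [sum_f_R0]. unfold sin_term.
change (fact (2*0+1)) with 1%nat. change (fact (2*1+1)) with 6%nat.
change (fact (2*2+1)) with 120%nat. change (fact (2*3+1)) with 5040%nat.
rewrite !INR_IZR_INZ. simpl. field. Qed.

Lemma lim_inv_shift d : is_lim_seq (fun n => / (INR n + d)) 0.
Proof.
  pose proof (is_lim_seq_plus' _ _ _ _ (lim_ratio (d + 1) d) (is_lim_seq_const (-1))) as H.
  replace (1 + -1) with 0 in H by ring.
  apply is_lim_seq_ext_loc with (2 := H).
  destruct (archimed (Rabs d)) as [Hup _].
  exists (S (Z.to_nat (up (Rabs d)))). intros n Hn.
  assert (HN : Rabs d < INR n).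
  { apply Rlt_le_trans with (IZR (up (Rabs d))); [exact Hup|].
    assert (0 <= up (Rabs d))%Z.
    { apply le_IZR. pose proof (Rabs_pos d). simpl. lra. }
    rewrite <- (Z2Nat.id (up (Rabs d))) by exact H0. rewrite <- INR_IZR_INZ.
    apply le_INR. lia. }
  pose proof (Rle_abs (-d)). rewrite Rabs_Ropp in H0.
  field. lra.
Qed.

Lemma tele (V : nat -> R) C K : is_lim_seq V 0 ->
  is_series (fun n => C * (V (K + n)%nat - V (K + n + 1)%nat)) (C * V K).
Proof. intro H.
  assert (HS : forall n, sum_n (fun n => C * (V (K + n)%nat - V (K + n + 1)%nat)) n = C * (V K - V (K + S n)%nat)).
  { induction n. rewrite sum_O. replace (K+0)%nat with K by lia. replace (K+0+1)%nat with (K+1)%nat by lia. reflexivity.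
    rewrite sum_Sn, IHn. unfold plus; simpl. replace (K + S n + 1)%nat with (K + S (S n))%nat by lia. ring. }
  assert (L : is_lim_seq (fun n => C * (V K - V (K + S n)%nat)) (C * V K)).
  { replace (C * V K) with (C * (V K - 0)) by ring.
    apply is_lim_seq_scal_l with (lu := Finite (V K - 0)).
    apply is_lim_seq_minus'. apply is_lim_seq_const.
    apply (is_lim_seq_incr_n (fun n => V n) (S K)) in H.
    apply is_lim_seq_ext with (2 := H). intro n. f_equal. lia. }
  assert (L2 : is_lim_seq (sum_n (fun n => C * (V (K + n)%nat - V (K + n + 1)%nat))) (C * V K)).
  { apply is_lim_seq_ext with (2 := L). intro n. rewrite HS. reflexivity. }
  exact L2.
Qed.

Lemma KEY1 alpha k0 : 1 < alpha < 2 -> (3 <= k0)%nat ->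
  Rpower (1 - (1 + alpha) / (5 + alpha / 2)) (5 + alpha / 2) * exp (alpha + 1)
    * Rpower (INR k0 + 1) alpha < Rpower (INR k0 + 1 / 2) alpha.
Proof. intros [H1 H2] Hk.
  assert (Hk3 : 3 <= INR k0) by (replace 3 with (INR 3) by (simpl; ring); apply le_INR; lia).
  set (p := 5 + alpha / 2). set (u := (1 + alpha) / p).
  assert (Hp : 0 < p) by (unfold p; lra).
  assert (Hu : 0 < u < 1).
  { unfold u. split. apply Rdiv_lt_0_compat; lra. apply Rmult_lt_reg_r with p; auto. field_simplify; unfold p; lra. }
  set (t := u / (2 - u)).
  assert (Ht : 0 <= t < 1).
  { unfold t. split. apply Rlt_le, Rdiv_lt_0_compat; lra. apply Rmult_lt_reg_r with (2 - u). lra. field_simplify; lra. }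
  pose proof (D1 t Ht) as Dt.
  replace ((1 + t) / (1 - t)) with (/ (1 - u)) in Dt by (unfold t; field; lra).
  rewrite ln_Rinv in Dt by lra.
  assert (Lk : ln (INR k0 + 1) - ln (INR k0 + 1/2) <= 1/7).
  { rewrite <- ln_div by lra. pose proof (ln_le1 ((INR k0 + 1) / (INR k0 + 1/2)) ltac:(apply Rdiv_lt_0_compat; lra)).
    eapply Rle_trans. exact H.
    replace ((INR k0 + 1) / (INR k0 + 1 / 2) - 1) with (/ (2 * INR k0 + 1)) by (field; lra).
    replace (1/7) with (/7) by field. apply Rinv_le_contravar; lra. }
  unfold Rpower. rewrite <- !exp_plus. apply exp_increasing.
  assert (up : u * p = 1 + alpha) by (unfold u; field; lra).
  assert (E : 2 * t * p = 2 * (1 + alpha) / (2 - u)) by (unfold t; rewrite <- up; field; lra).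
  assert (u2 : 2 - u = 18 / (10 + alpha)) by (unfold u, p; field; lra).
  assert (E2 : 2 * (1 + alpha) / (2 - u) = (1 + alpha) + (1+alpha)^2/9) by (rewrite u2; field; lra).
  assert (ln (1 - u) * p <= - (2 * t) * p) by (apply Rmult_le_compat_r; lra).
  fold p. fold u. nra.
Qed.

Lemma KEY2 x : 1/2 < x < 1 -> PI * (x * (1 - x ^ 2)) < sqrt 2 * exp (13 / 12) * sin (PI * x).
Proof. intros [H1 H2].
  set (y := 1 - x). assert (Hy : 0 < y < 1/2) by (unfold y; lra).
  pose proof PI_RGT_0 as P0. pose proof PI_4 as P4.
  assert (Sx : sin (PI * x) = sin (PI * y)).
  { unfold y. rewrite <- sin_PI_x. f_equal. ring. }
  assert (Hty : 0 <= PI * y <= PI) by nra.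
  destruct (SIN (PI * y) (proj1 Hty) (proj2 Hty)) as [Slb _].
  rewrite sin_lb_eq in Slb. set (t := PI * y) in *.
  assert (Ht2 : t <= 2) by (unfold t; nra).
  assert (St : t * (1 - t^2/6) <= sin t).
  { assert (0 <= t^5/120 - t^7/5040).
    { replace (t^5/120 - t^7/5040) with (t^5 * (42 - t^2) / 5040) by field.
      apply Rmult_le_pos. apply Rmult_le_pos. apply pow_le; lra. nra. lra. }
    lra. }
  assert (Q2 : 1.41 < sqrt 2).
  { pose proof (sqrt_sqrt 2 ltac:(lra)). pose proof (sqrt_pos 2).
    destruct (Rlt_or_le 1.41 (sqrt 2)) as [h|h]; auto.
    assert (sqrt 2 * sqrt 2 <= 1.41 * 1.41) by (apply Rmult_le_compat; lra). lra. }
  assert (Q3 : 1 + 13/12 <= exp (13/12)) by apply exp_ineq1_le.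
  assert (U : 2.9 < sqrt 2 * exp (13 / 12)) by nra.
  rewrite Sx. fold t.
  replace (x * (1 - x^2)) with (y * ((1 - y) * (2 - y))) by (unfold y; ring).
  assert (Pol : (1 - y) * (2 - y) < 2.9 * (1 - 16 * y^2 / 6)) by nra.
  assert (PP : PI * PI <= 16) by nra.
  assert (T2 : t^2 <= 16 * y^2).
  { unfold t. replace ((PI * y)^2) with ((PI*PI) * (y*y)) by ring. replace (16 * y^2) with (16 * (y*y)) by ring.
    apply Rmult_le_compat_r; nra. }
  assert (W : 0 <= 1 - 16 * y^2 / 6) by nra.
  assert (Wt : 1 - 16 * y^2/6 <= 1 - t^2/6) by lra.
  assert (K : (1 - y) * (2 - y) < sqrt 2 * exp (13 / 12) * (1 - t^2/6)) by nra.
  assert (0 < t) by (unfold t; nra).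
  apply Rlt_le_trans with (sqrt 2 * exp (13 / 12) * (t * (1 - t ^ 2 / 6))).
  - replace (PI * (y * ((1 - y) * (2 - y)))) with (t * ((1 - y) * (2 - y))) by (unfold t; ring).
    replace (sqrt 2 * exp (13 / 12) * (t * (1 - t ^ 2 / 6))) with (t * (sqrt 2 * exp (13 / 12) * (1 - t ^ 2 / 6))) by ring.
    apply Rmult_lt_compat_l; auto.
  - apply Rmult_le_compat_l. nra. auto.
Qed.

Theorem lemma1 (alpha : R) (k0 : nat) :
  1 < alpha < 2 -> (3 <= k0)%nat ->
  let tail := fun n : nat => Rabs (cj alpha (Z.of_nat (k0 + 1 + n))) in
  ex_series tail /\
  Rpower (1 - (1 + alpha) / (5 + alpha / 2)) (5 + alpha / 2) * exp (alpha + 1)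
    * Gamma (alpha + 1) * sin (PI * alpha / 2)
    / (PI * alpha * Rpower (INR k0 + 1 / 2) alpha)
  < Series tail
  < sqrt 2 * exp (13 / 12) * Gamma (alpha + 1) * sin (PI * alpha / 2)
    / (PI * alpha * Rpower (INR k0 - 1) alpha).
Proof.
  intros [Ha1 Ha2] Hk tail.
  set (x := alpha / 2).
  assert (Hx : 1/2 < x < 1) by (unfold x; lra).
  assert (Hk3 : 3 <= INR k0) by (replace 3 with (INR 3) by (simpl; ring); apply le_INR; lia).
  destruct (refl x ltac:(lra)) as [a [b [Ta [Tb [Pa [Pb [Slo Sup]]]]]]].
  set (s := a * b) in *.
  destruct (refl (alpha - 1) ltac:(lra)) as [a' [b' [Ta' [_ [Pa' _]]]]].
  assert (TA : is_lim_seq (T (alpha + 1)) (a' / (alpha - 1) / (alpha - 1 + 1))).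
  { replace (alpha + 1) with ((alpha - 1) + 1 + 1) by ring.
    apply lim_up. lra. apply lim_up. lra. exact Ta'. }
  set (A := rgamma (alpha + 1)).
  assert (HA : A = a' / (alpha - 1) / (alpha - 1 + 1)) by (apply rgamma_lim; exact TA).
  assert (PA : 0 < A).
  { rewrite HA. apply Rdiv_lt_0_compat; [apply Rdiv_lt_0_compat|]; lra. }
  set (K := (k0 + 1)%nat).
  set (V := fun N : nat => rgamma (INR N + x) / rgamma (INR N - x)).
  set (C := s / (alpha * A)).
  assert (GF := gam_facts x a b ltac:(lra) Ta Tb Pa Pb).
  assert (Htail : forall n, C * (V (K + n)%nat - V (K + n + 1)%nat) = tail n).
  { intro n. unfold tail, cj.
    set (N := (k0 + 1 + n)%nat).
    assert (HN : (1 <= N)%nat) by lia.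
    assert (HNr : 4 <= INR N) by (replace 4 with (INR 4) by (simpl; ring); apply le_INR; unfold N; lia).
    destruct (GF N HN) as [g1 [g2 [g3 [g4 g5]]]].
    rewrite <- INR_IZR_INZ, <- pow_powerRZ.
    unfold Gamma. fold A.
    replace (alpha / 2 - INR N + 1) with (x + 1 - INR N) by (unfold x; ring).
    replace (alpha / 2 + INR N + 1) with (INR N + x + 1) by (unfold x; ring).
    replace (K + n)%nat with N by (unfold K, N; lia).
    replace (N + 1)%nat with (S N) by lia.
    unfold V. rewrite S_INR.
    replace (INR N + 1 + x) with (INR N + x + 1) by ring.
    replace (INR N + 1 - x) with (INR N - x + 1) by ring.
    assert (E1 : rgamma (INR N + x + 1) = rgamma (INR N + x) / (INR N + x)).
    { rewrite g3. field. lra. }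
    assert (E2 : rgamma (INR N - x + 1) = rgamma (INR N - x) / (INR N - x)).
    { rewrite g4. field. lra. }
    assert (E3 : Rabs (rgamma (x + 1 - INR N)) = s / rgamma (INR N - x)).
    { unfold s. rewrite <- g5. field. lra. }
    rewrite !Rabs_mult, pow_1_abs, Rabs_inv, (Rabs_pos_eq A) by lra.
    rewrite E3, E1, E2. rewrite Rabs_pos_eq.
    2: { apply Rlt_le, Rdiv_lt_0_compat; lra. }
    unfold C. unfold x in *. field. repeat split; intro; lra. }
  assert (V0 : is_lim_seq V 0).
  { apply (is_lim_seq_incr_n V 3).
    apply is_lim_seq_le_le with (u := fun _ => 0) (w := fun n => / (INR n + (2 - x))).
    - intro n. destruct (GF (n + 3)%nat ltac:(lia)) as [g1 [g2 _]].
      destruct (V_bounds x (n + 3) ltac:(lra) ltac:(lia) g2) as [_ Vu].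
      pose proof (pos_INR n).
      rewrite plus_INR in *. replace (INR 3) with 3 in * by (simpl; ring).
      split. unfold V. rewrite plus_INR. replace (INR 3) with 3 by (simpl; ring).
      apply Rlt_le, Rdiv_lt_0_compat; auto.
      unfold V. rewrite plus_INR. replace (INR 3) with 3 by (simpl; ring).
      eapply Rle_trans. exact Vu.
      replace (INR n + 3 - 1 - x) with (INR n + (2 - x)) by ring.
      apply Rinv_le_contravar. lra.
      rewrite <- (Rpower_1 (INR n + (2 - x))) at 1 by lra.
      apply Rle_Rpower; lra.
    - apply is_lim_seq_const.
    - apply lim_inv_shift. }
  assert (HS : is_series tail (C * V K)).
  { apply is_series_ext with (1 := Htail). apply tele. exact V0. }
  assert (SV : Series tail = C * V K) by (apply is_series_unique; exact HS).
  split. exists (C * V K). exact HS.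
  rewrite SV.
  destruct (GF K ltac:(unfold K; lia)) as [_ [gK _]].
  destruct (V_bounds x K ltac:(lra) ltac:(unfold K; lia) gK) as [Vl Vu].
  fold (V K) in Vl, Vu.
  assert (HK : INR K = INR k0 + 1) by (unfold K; rewrite plus_INR; simpl; ring).
  rewrite HK in Vl, Vu.
  replace (2 * x) with alpha in Vl, Vu by (unfold x; field).
  replace (PI * alpha / 2) with (PI * x) by (unfold x; field).
  unfold Gamma. fold A.
  set (sig := sin (PI * x)).
  assert (Psig : 0 < sig) by (unfold sig; apply sin_gt_0; pose proof PI_RGT_0; nra).
  pose proof PI_RGT_0 as P0.
  pose proof (KEY1 alpha k0 (conj Ha1 Ha2) Hk) as K1.
  pose proof (KEY2 x Hx) as K2. fold sig in K2.
  change (alpha / 2) with x in K1.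
  set (L := Rpower (1 - (1 + alpha) / (5 + x)) (5 + x) * exp (alpha + 1)) in *.
  set (R1 := Rpower (INR k0 + 1) alpha) in *.
  set (Rh := Rpower (INR k0 + 1 / 2) alpha) in *.
  set (Rm := Rpower (INR k0 - 1) alpha).
  assert (PR1 : 0 < R1) by apply Rpower_pos.
  assert (PRh : 0 < Rh) by apply Rpower_pos.
  assert (PRm : 0 < Rm) by apply Rpower_pos.
  assert (PL : 0 < L) by (unfold L; apply Rmult_lt_0_compat; [apply Rpower_pos|apply exp_pos]).
  assert (PC : 0 < C) by (unfold C, s; apply Rdiv_lt_0_compat; nra).
  assert (Psp : 0 < sig / PI) by (apply Rdiv_lt_0_compat; lra).
  split.
  - apply Rlt_le_trans with (sig / PI / (alpha * A * R1)).
    + replace (L * / A * sig / (PI * alpha * Rh)) with ((sig / (PI * alpha * A)) * (L / Rh))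
        by (field; repeat split; lra).
      replace (sig / PI / (alpha * A * R1)) with ((sig / (PI * alpha * A)) * (/ R1))
        by (field; repeat split; lra).
      apply Rmult_lt_compat_l. apply Rdiv_lt_0_compat; [lra|]. apply Rmult_lt_0_compat; [apply Rmult_lt_0_compat|]; lra.
      apply Rmult_lt_reg_r with (R1 * Rh). nra.
      replace (L / Rh * (R1 * Rh)) with (L * R1) by (field; lra).
      replace (/ R1 * (R1 * Rh)) with Rh by (field; lra). exact K1.
    + apply Rle_trans with (C * / R1).
      * unfold C. replace (s / (alpha * A) * / R1) with (s / (alpha * A * R1)) by (field; repeat split; lra).
        unfold Rdiv at 2. unfold Rdiv at 2. apply Rmult_le_compat_r.
        apply Rlt_le, Rinv_0_lt_compat. repeat apply Rmult_lt_0_compat; lra.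
        exact Slo.
      * apply Rmult_le_compat_l; lra.
  - assert (Vu' : V K <= / Rm).
    { eapply Rle_trans. exact Vu. apply Rinv_le_contravar. exact PRm.
      unfold Rm. apply Rle_Rpower_l. lra. split. lra. unfold x in *. lra. }
    assert (Cu : C <= x * (1 - x ^ 2) / (alpha * A)).
    { unfold C. unfold Rdiv. apply Rmult_le_compat_r.
      apply Rlt_le, Rinv_0_lt_compat. nra. exact Sup. }
    apply Rle_lt_trans with (x * (1 - x ^ 2) / (alpha * A) * / Rm).
    + assert (0 < / R1) by (apply Rinv_0_lt_compat; lra). apply Rmult_le_compat; lra.
    + replace (sqrt 2 * exp (13 / 12) * / A * sig / (PI * alpha * Rm))
        with ((sqrt 2 * exp (13 / 12) * sig) / (PI * alpha * A * Rm)) by (field; repeat split; lra).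
      replace (x * (1 - x ^ 2) / (alpha * A) * / Rm) with ((PI * (x * (1 - x ^ 2))) / (PI * alpha * A * Rm))
        by (field; repeat split; lra).
      unfold Rdiv. apply Rmult_lt_compat_r. apply Rinv_0_lt_compat. apply Rmult_lt_0_compat; [apply Rmult_lt_0_compat; [apply Rmult_lt_0_compat|]|]; lra.
      exact K2.
Qed.
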